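(* Let $v_1,v_2\in\mathbb{R}^2$ be two linearly independent unit vectors, and let $\xi\in\mathbb{R}^2$ satisfy $d_1:=\langle v_1,\xi\rangle\ge0$ and $d_2:=\langle v_2,\xi\rangle\ge 0$. Define $$\gamma_{12}:=\Pr\{\langle X,v_1\rangle\le 0,\ \langle X,v_2\rangle\le0\}\quad\text{for } X\sim\mathcal{N}(\xi,I).$$ Then $\alpha_{12}:=\langle v_1,v_2\rangle$ is identifiable from $d_1,d_2,\gamma_{12}$. That is, if $(v_1',v_2',\xi')$ is another triple satisfying the same hypotheses with the same values of $d_1,d_2,\gamma_{12}$, then $\langle v_1',v_2'\rangle=\langle v_1,v_2\rangle$. *)

(* Defs.v *)
From HB Require Import structures.
From mathcomp Require Import all_boot all_order all_algebra.
From mathcomp Require Import all_classical all_reals all_analysis.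
Set Implicit Arguments. Unset Strict Implicit. Unset Printing Implicit Defensive.
Import Order.TTheory GRing.Theory Num.Theory.
Local Open Scope ring_scope.

Definition dot2 {R : realType} (u v : R * R) : R := u.1 * v.1 + u.2 * v.2.

Definition lin_indep2 {R : realType} (u v : R * R) : Prop :=
  forall a b : R, a * u.1 + b * v.1 = 0 -> a * u.2 + b * v.2 = 0 -> a = 0 /\ b = 0.

Definition gauss2_pdf {R : realType} (xi : R * R) (x : R * R) : R :=
  (2 * pi)^-1 * expR (- ((x.1 - xi.1) ^+ 2 + (x.2 - xi.2) ^+ 2) / 2).

Definition gauss2_prob {R : realType} (xi : R * R) (A : set (R * R)) : \bar R :=
  (\int[(@lebesgue_measure R \x @lebesgue_measure R)%E]_(x in A) (gauss2_pdf xi x)%:E)%E.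

Definition gamma12 {R : realType} (v1 v2 xi : R * R) : \bar R :=
  gauss2_prob xi [set x | dot2 x v1 <= 0 /\ dot2 x v2 <= 0].

Definition admissible {R : realType} (v1 v2 xi : R * R) : Prop :=
  [/\ dot2 v1 v1 = 1, dot2 v2 v2 = 1, lin_indep2 v1 v2,
      0 <= dot2 v1 xi & 0 <= dot2 v2 xi].

(* Main.v *)
Require Import Defs.
From HB Require Import structures.
From mathcomp Require Import all_boot all_order all_algebra.
From mathcomp Require Import all_classical all_reals all_analysis.
From mathcomp Require Import ring lra measurable_realfun.
Import Order.TTheory GRing.Theory Num.Theory.
Import numFieldNormedType.Exports.
Local Open Scope classical_set_scope.
Local Open Scope ring_scope.

Section aff.
Context {R : realType}.
Local Notation mu := (@lebesgue_measure R).

Definition aff (k c : R) : measurableTypeR R -> measurableTypeR R := fun x => k * x + c.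
Lemma maff k c : measurable_fun setT (aff k c).
Proof. by apply: measurable_funD => //; apply: measurable_funM. Qed.
Definition pfm k c : measure (measurableTypeR R) R :=
  measure_function_pushforward__canonical__measure_function_Measure mu (maff k c).

Lemma lebesgue_aff (k c : R) (A : set R) : k != 0 -> measurable A ->
  (pushforward mu (aff k c) A = (`|k|^-1)%:E * mu A)%E.
Proof.
move=> k0 mA.
have -> : mu A = mscale (`|k|%:nng) (pfm k c) A.
  apply: (@lebesgue_measure_unique _ (mscale (`|k|%:nng) (pfm k c))) => //= _ [[a b]] _ <-.
  rewrite /mscale /= /pushforward.
  have [kp|kn] := ltrP 0 k.
    have -> : aff k c @^-1` `]a, b] = `](a - c) / k, (b - c) / k]%classic.
      apply/seteqP; split => x /=; rewrite /aff !in_itv /= ?ltr_pdivrMr ?ler_pdivlMr // => /andP[h1 h2];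
        apply/andP; split; lra.
    rewrite !lebesgue_measure_itv /= !lte_fin ltr_pM2r ?invr_gt0 // ?ltrD2r.
    case: ifPn => ab; last by rewrite mule0.
    rewrite -EFinM -EFinD; congr (_%:E).
    rewrite gtr0_norm //; field; lra.
  have kn' : k < 0 by rewrite lt_neqAle k0 kn.
  have -> : aff k c @^-1` `]a, b] = `[(b - c) / k, (a - c) / k[%classic.
    apply/seteqP; split => x /=; rewrite /aff !in_itv /= ?ltr_ndivrMr ?ler_ndivlMr ?ler_ndivrMr ?ltr_ndivlMr// => /andP[h1 h2];
      apply/andP; split; lra.
  rewrite !lebesgue_measure_itv /= !lte_fin ltr_nM2r ?invr_lt0 // ?ltrD2r.
  case: ifPn => ab; last by rewrite mule0.
  rewrite -EFinM -EFinD; congr (_%:E).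
  rewrite ltr0_norm //; field; lra.
rewrite /mscale /= muleA -EFinM mulVf ?normr_eq0// mul1e.
by []. Qed.

Lemma integral_aff (k c : R) (f : R -> \bar R) : k != 0 ->
  measurable_fun setT f -> (forall x, (0 <= f x)%E) ->
  (\int[mu]_x f (k * x + c)%R = (`|k|^-1)%:E * \int[mu]_x f x)%E.
Proof.
move=> k0 mf f0.
have -> : (\int[mu]_x f (k * x + c)%R = \int[mu]_(x in aff k c @^-1` setT) (f \o aff k c) x)%E.
  by rewrite preimage_setT.
rewrite -(ge0_integral_pushforward (maff k c))//.
have r0 : (0 <= `|k|^-1 :> R)%R by rewrite invr_ge0.
pose r := NngNum r0.
transitivity (\int[mscale r mu]_(x in setT) f x)%E.
  apply: eq_measure_integral; first exact: maff.
  by move=> _ A mA _ /=; rewrite lebesgue_aff.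
by rewrite ge0_integral_mscale.
Qed.
End aff.

Section two.
Context {R : realType}.
Local Notation mu := (@lebesgue_measure R).
Local Notation mu2 := (@lebesgue_measure R \x @lebesgue_measure R)%E.
Local Notation T2 := (measurableTypeR R * measurableTypeR R)%type.

Lemma measurable_lin2 (a b c : R) :
  measurable_fun setT (fun z : T2 => a * z.1 + b * z.2 + c).
Proof.
apply: measurable_funD => //; apply: measurable_funD.
  by apply: measurable_funM => //; exact: measurable_fst.
by apply: measurable_funM => //; exact: measurable_snd.
Qed.

Lemma measurable_map2 (a b c d e g : R) :
  measurable_fun setT (fun z : T2 => ((a * z.1 + b * z.2 + c), (d * z.1 + e * z.2 + g)) : T2).
Proof.
by apply/measurable_fun_pairP; split; exact: measurable_lin2.
Qed.

Lemma measurable_comp2 (h : T2 -> \bar R) (a b c d e g : R) :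
  measurable_fun setT h ->
  measurable_fun setT (fun z : T2 => h ((a * z.1 + b * z.2 + c), (d * z.1 + e * z.2 + g))).
Proof. by move=> mh; apply: measurableT_comp => //; exact: measurable_map2. Qed.

Lemma shearA (h : T2 -> \bar R) (k c : R) :
  measurable_fun setT h -> (forall z, (0 <= h z)%E) ->
  (\int[mu2]_z h ((z.1 + k * z.2 + c)%R, z.2) = \int[mu2]_z h z)%E.
Proof.
move=> mh h0.
have mh' : measurable_fun setT (fun z : T2 => h (z.1 + k * z.2 + c, z.2)).
  have := measurable_comp2 h 1 k c 0 1 0 mh.
  by apply: eq_measurable_fun => z _; rewrite !mul1r mul0r add0r addr0.
rewrite (fubini_tonelli2 _ mh') //= (fubini_tonelli2 _ mh) //=.
apply: eq_integral => y _; rewrite /fubini_G /=.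
have := @integral_aff R 1 (k * y + c) (fun t => h (t, y)) (oner_neq0 _).
rewrite normr1 invr1 mul1e => <- //.
- by apply: eq_integral => x _; rewrite mul1r addrA.
- exact: measurable_fun_pair1.
Qed.

Lemma shearB (h : T2 -> \bar R) (k c : R) :
  measurable_fun setT h -> (forall z, (0 <= h z)%E) ->
  (\int[mu2]_z h (z.1, (z.2 + k * z.1 + c)%R) = \int[mu2]_z h z)%E.
Proof.
move=> mh h0.
have mh' : measurable_fun setT (fun z : T2 => h (z.1, z.2 + k * z.1 + c)).
  have := measurable_comp2 h 1 0 0 k 1 c mh.
  by apply: eq_measurable_fun => z _; rewrite !mul1r mul0r !addr0 (addrC (k * _)).
rewrite (fubini_tonelli1 _ mh') //= (fubini_tonelli1 _ mh) //=.
apply: eq_integral => x _; rewrite /fubini_F /=.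
have := @integral_aff R 1 (k * x + c) (fun t => h (x, t)) (oner_neq0 _).
rewrite normr1 invr1 mul1e => <- //.
- by apply: eq_integral => y _; rewrite mul1r addrA.
- exact: measurable_fun_pair2.
Qed.

Lemma flipB (h : T2 -> \bar R) :
  measurable_fun setT h -> (forall z, (0 <= h z)%E) ->
  (\int[mu2]_z h (z.1, (- z.2)%R) = \int[mu2]_z h z)%E.
Proof.
move=> mh h0.
have mh' : measurable_fun setT (fun z : T2 => h (z.1, - z.2)).
  have := measurable_comp2 h 1 0 0 0 (-1) 0 mh.
  by apply: eq_measurable_fun => z _; rewrite !mul1r !mul0r !addr0 add0r mulN1r.
rewrite (fubini_tonelli1 _ mh') //= (fubini_tonelli1 _ mh) //=.
apply: eq_integral => x _; rewrite /fubini_F /=.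
have := @integral_aff R (-1) 0 (fun t => h (x, t)) (_ : (-1 : R) != 0).
rewrite normrN normr1 invr1 mul1e => <- //.
- by apply: eq_integral => y _; rewrite mulN1r addr0.
- exact: measurable_fun_pair2.
Qed.
End two.

Section rot.
Context {R : realType}.
Local Notation mu2 := (@lebesgue_measure R \x @lebesgue_measure R)%E.
Local Notation T2 := (measurableTypeR R * measurableTypeR R)%type.

Definition shA (k c : R) (z : T2) : T2 := ((z.1 + k * z.2 + c)%R, z.2).
Definition shB (k c : R) (z : T2) : T2 := (z.1, (z.2 + k * z.1 + c)%R).
Definition lin2 (p q r t : R) (z : T2) : T2 := ((p * z.1 + q * z.2)%R, (r * z.1 + t * z.2)%R).

Lemma mlin2 p q r t : measurable_fun setT (lin2 p q r t).
Proof.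
have := measurable_map2 p q 0 r t 0.
by apply: eq_measurable_fun => z _; rewrite /lin2 !addr0.
Qed.

Lemma mshA k c : measurable_fun setT (shA k c).
Proof.
have := measurable_map2 1 k c 0 1 0.
by apply: eq_measurable_fun => z _; rewrite /shA !mul1r mul0r add0r addr0.
Qed.

Lemma mshB k c : measurable_fun setT (shB k c).
Proof.
have := measurable_map2 1 0 0 k 1 c.
by apply: eq_measurable_fun => z _; rewrite /shB !mul1r mul0r !addr0 (addrC (k * _)).
Qed.

Lemma mcomp (h : T2 -> \bar R) (F : T2 -> T2) :
  measurable_fun setT h -> measurable_fun setT F -> measurable_fun setT (h \o F).
Proof. by move=> mh mF; apply: measurableT_comp. Qed.

Lemma shearA' (h : T2 -> \bar R) k c : measurable_fun setT h -> (forall z, (0 <= h z)%E) ->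
  (\int[mu2]_z h (shA k c z) = \int[mu2]_z h z)%E.
Proof. exact: shearA. Qed.

Lemma shearB' (h : T2 -> \bar R) k c : measurable_fun setT h -> (forall z, (0 <= h z)%E) ->
  (\int[mu2]_z h (shB k c z) = \int[mu2]_z h z)%E.
Proof. exact: shearB. Qed.

Lemma rot_gen (h : T2 -> \bar R) (c s : R) : c ^+ 2 + s ^+ 2 = 1 -> 1 + c != 0 ->
  measurable_fun setT h -> (forall z, (0 <= h z)%E) ->
  (\int[mu2]_z h (lin2 c (- s) s c z) = \int[mu2]_z h z)%E.
Proof.
move=> cs c1 mh h0.
pose t := s / (1 + c).
have h1 : t * s - (1 - c) = 0.
  rewrite /t; have -> : s / (1 + c) * s - (1 - c) = (c ^+ 2 + s ^+ 2 - 1) / (1 + c) by field.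
  by rewrite cs subrr mul0r.
have h2 : t * (1 + c) - s = 0 by rewrite /t; field.
have E z : lin2 c (- s) s c z = shA (- t) 0 (shB s 0 (shA (- t) 0 z)).
  rewrite /lin2 /shA /shB /=; congr (_, _).
    apply/eqP; rewrite -subr_eq0; apply/eqP.
    transitivity ((z.1 - t * z.2) * (t * s - (1 - c)) + z.2 * (t * (1 + c) - s)); first by ring.
    by rewrite h1 h2 !mulr0 addr0.
  apply/eqP; rewrite -subr_eq0; apply/eqP.
  transitivity (z.2 * (t * s - (1 - c))); first by ring.
  by rewrite h1 mulr0.
under eq_integral do rewrite E.
have m1 : measurable_fun setT (h \o shA (- t) 0) by exact: mcomp (mshA _ _).
have m2 : measurable_fun setT ((h \o shA (- t) 0) \o shB s 0) by exact: mcomp (mshB _ _).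
rewrite (shearA' ((h \o shA (- t) 0) \o shB s 0)) //.
rewrite (shearB' (h \o shA (- t) 0)) //.
rewrite (shearA' h) //.
all: try by move=> z; exact: h0.
Qed.

Lemma rot_all (h : T2 -> \bar R) (c s : R) : c ^+ 2 + s ^+ 2 = 1 ->
  measurable_fun setT h -> (forall z, (0 <= h z)%E) ->
  (\int[mu2]_z h (lin2 c (- s) s c z) = \int[mu2]_z h z)%E.
Proof.
move=> cs mh h0.
have [c1|c1] := eqVneq (1 + c) 0; last exact: rot_gen.
have hc : c = -1 by apply/eqP; rewrite -subr_eq0 opprK addrC c1.
have hs : s = 0.
  apply/eqP; rewrite -sqrf_eq0; apply/eqP.
  by move: cs; rewrite hc sqrrN expr1n => /(congr1 (fun x => x - 1)); rewrite subrr addrC addKr.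
have E z : lin2 c (- s) s c z = lin2 0 (- 1) 1 0 (lin2 0 (- 1) 1 0 z).
  by rewrite /lin2 hc hs /=; congr (_, _); ring.
under eq_integral do rewrite E.
have m1 : measurable_fun setT (h \o lin2 0 (- 1) 1 0) by exact: mcomp (mlin2 _ _ _ _).
rewrite (rot_gen (h \o lin2 0 (- 1) 1 0)) //; first (rewrite (rot_gen h) //).
all: try by rewrite expr0n expr1n add0r.
all: try by rewrite addr0 oner_eq0.
all: try by move=> z; exact: h0.
Qed.

Lemma orth_inv (h : T2 -> \bar R) (p q r t : R) :
  p ^+ 2 + q ^+ 2 = 1 -> r ^+ 2 + t ^+ 2 = 1 -> p * r + q * t = 0 ->
  measurable_fun setT h -> (forall z, (0 <= h z)%E) ->
  (\int[mu2]_z h (lin2 p q r t z) = \int[mu2]_z h z)%E.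
Proof.
move=> pq rt o mh h0.
pose m := p * t - q * r.
have er : r = - q * m.
  apply/eqP; rewrite -subr_eq0; apply/eqP.
  transitivity (r * (1 - (p ^+ 2 + q ^+ 2)) + p * (p * r + q * t)); first by rewrite /m; ring.
  by rewrite pq o subrr !mulr0 addr0.
have et : t = p * m.
  apply/eqP; rewrite -subr_eq0; apply/eqP.
  transitivity (t * (1 - (p ^+ 2 + q ^+ 2)) + q * (p * r + q * t)); first by rewrite /m; ring.
  by rewrite pq o subrr !mulr0 addr0.
have m2 : m ^+ 2 = 1.
  transitivity ((p ^+ 2 + q ^+ 2) * (r ^+ 2 + t ^+ 2) - (p * r + q * t) ^+ 2); first by rewrite /m; ring.
  by rewrite pq rt o expr0n /= subr0 mulr1.
have : (m - 1) * (m + 1) = 0 by transitivity (m ^+ 2 - 1); [ring | rewrite m2 subrr].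
move/eqP; rewrite mulf_eq0 => /orP[|] /eqP hm.
  have {}hm : m = 1 by apply/eqP; rewrite -subr_eq0 hm.
  have E z : lin2 p q r t z = lin2 p (- (- q)) (- q) p z.
    by rewrite /lin2 er et hm opprK !mulr1.
  under eq_integral do rewrite E.
  by apply: rot_all; rewrite // sqrrN.
have {}hm : m = -1 by apply/eqP; rewrite -subr_eq0 opprK hm.
have E z : lin2 p q r t z = (lin2 p (- q) q p) (z.1, - z.2).
  rewrite /lin2 er et hm /=; congr (_, _); ring.
under eq_integral do rewrite E.
have m1 : measurable_fun setT (h \o lin2 p (- q) q p) by exact: mcomp (mlin2 _ _ _ _).
rewrite (flipB (h \o lin2 p (- q) q p)) //.
  by apply: rot_all; rewrite // addrC.
by move=> z; exact: h0.
Qed.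
End rot.

Section G.
Context {R : realType}.
Local Notation mu := (@lebesgue_measure R).
Local Notation mu2 := (@lebesgue_measure R \x @lebesgue_measure R)%E.
Local Notation T2 := (measurableTypeR R * measurableTypeR R)%type.

Definition g0 (z : T2) : R := (2 * pi)^-1 * expR (- (z.1 ^+ 2 + z.2 ^+ 2) / 2).
Definition HP (w : R * R) (c : R) : set T2 := [set z | dot2 (z : R * R) w <= c].
Definition Gf (w1 w2 : R * R) (c1 c2 : R) (z : T2) : \bar R :=
  (g0 z * \1_(HP w1 c1 `&` HP w2 c2) z)%:E.
Definition G (w1 w2 : R * R) (c1 c2 : R) : \bar R := (\int[mu2]_z Gf w1 w2 c1 c2 z)%E.

Lemma g0_gt0 z : 0 < g0 z.
Proof. by rewrite /g0 mulr_gt0 ?expR_gt0 // invr_gt0 mulr_gt0 ?pi_gt0. Qed.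

Lemma g0_ge0 z : 0 <= g0 z.
Proof. exact/ltW/g0_gt0. Qed.

Lemma mg0 : measurable_fun setT g0.
Proof.
apply: measurable_funM => //; apply: measurableT_comp => //.
apply: measurable_funM => //; apply: measurableT_comp => //.
apply: measurable_funD; apply: measurable_funX.
  exact: measurable_fst.
exact: measurable_snd.
Qed.

Lemma mHP w c : measurable (HP w c).
Proof.
have := measurable_lin2 w.1 w.2 0 measurableT _ (@measurable_itv R `]-oo, c]).
rewrite setTI; congr measurable; apply/seteqP; split => z /=;
  by rewrite /HP /dot2 in_itv /= addr0 (mulrC w.1) (mulrC w.2).
Qed.

Lemma mGf w1 w2 c1 c2 : measurable_fun setT (Gf w1 w2 c1 c2).
Proof.
apply/measurable_EFinP; apply: measurable_funM; first exact: mg0.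
by apply: measurable_indic; apply: measurableI; exact: mHP.
Qed.

Lemma Gf_ge0 w1 w2 c1 c2 z : (0 <= Gf w1 w2 c1 c2 z)%E.
Proof. by rewrite lee_fin mulr_ge0 // ?g0_ge0. Qed.

Lemma G_swap w1 w2 c1 c2 : G w1 w2 c1 c2 = G w2 w1 c2 c1.
Proof. by rewrite /G /Gf setIC. Qed.


Lemma gamma_G (v1 v2 xi : R * R) :
  gamma12 v1 v2 xi = G v1 v2 (- dot2 v1 xi) (- dot2 v2 xi).
Proof.
rewrite /gamma12 /gauss2_prob integral_mkcond /G.
set F := Gf v1 v2 (- dot2 v1 xi) (- dot2 v2 xi).
transitivity (\int[mu2]_z F (shA 0 (- xi.1) (shB 0 (- xi.2) z)))%E.
  apply: eq_integral => z _; rewrite patchE /F /Gf /shA /shB /= !mul0r !addr0.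
  have E1 : forall v : R * R, dot2 (z.1 - xi.1, z.2 - xi.2) v = dot2 z v - dot2 v xi.
    by move=> v; rewrite /dot2 /=; ring.
  have Eg : gauss2_pdf xi z = g0 (z.1 - xi.1, z.2 - xi.2) by [].
  rewrite indicE Eg; case: ifPn => zA.
    rewrite mem_set ?mulr1 //; move: zA; rewrite inE => -[h1 h2].
    by split; rewrite /HP /= E1 lerBlDr addNr.
  rewrite memNset ?mulr0 //; move: zA; rewrite notin_setE => h [h1 h2]; apply: h.
  by move: h1 h2; rewrite /HP /= !E1 !lerBlDr !addNr.
have mF : measurable_fun setT F by exact: mGf.
have F0 : forall z, (0 <= F z)%E by move=> z; exact: Gf_ge0.
rewrite (shearB' (F \o shA 0 (- xi.1))) //.
- by rewrite (shearA' F).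
- exact: mcomp (mshA _ _).
- by move=> z; exact: F0.
Qed.
End G.

Section canon.
Context {R : realType}.
Local Notation mu2 := (@lebesgue_measure R \x @lebesgue_measure R)%E.
Local Notation T2 := (measurableTypeR R * measurableTypeR R)%type.

Lemma orth_cols (p q r t : R) :
  p ^+ 2 + q ^+ 2 = 1 -> r ^+ 2 + t ^+ 2 = 1 -> p * r + q * t = 0 ->
  [/\ p ^+ 2 + r ^+ 2 = 1, q ^+ 2 + t ^+ 2 = 1 & p * q + r * t = 0].
Proof.
move=> pq rt o.
pose m := p * t - q * r.
have er : r = - q * m.
  apply/eqP; rewrite -subr_eq0; apply/eqP.
  transitivity (r * (1 - (p ^+ 2 + q ^+ 2)) + p * (p * r + q * t)); first by rewrite /m; ring.
  by rewrite pq o subrr !mulr0 addr0.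
have et : t = p * m.
  apply/eqP; rewrite -subr_eq0; apply/eqP.
  transitivity (t * (1 - (p ^+ 2 + q ^+ 2)) + q * (p * r + q * t)); first by rewrite /m; ring.
  by rewrite pq o subrr !mulr0 addr0.
have m2 : m ^+ 2 = 1.
  transitivity ((p ^+ 2 + q ^+ 2) * (r ^+ 2 + t ^+ 2) - (p * r + q * t) ^+ 2); first by rewrite /m; ring.
  by rewrite pq rt o expr0n /= subr0 mulr1.
split.
- transitivity (p ^+ 2 + q ^+ 2 * m ^+ 2); first by rewrite er; ring.
  by rewrite m2 mulr1.
- transitivity (q ^+ 2 + p ^+ 2 * m ^+ 2); first by rewrite et; ring.
  by rewrite m2 mulr1 addrC.
- transitivity (p * q * (1 - m ^+ 2)); first by rewrite er et; ring.
  by rewrite m2 subrr mulr0.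
Qed.

Lemma alpha_lt1 (v1 v2 : R * R) : dot2 v1 v1 = 1 -> dot2 v2 v2 = 1 ->
  lin_indep2 v1 v2 -> (dot2 v1 v2) ^+ 2 < 1.
Proof.
move=> u1 u2 li; set a := dot2 v1 v2.
have E : 1 - a ^+ 2 = (v1.1 - a * v2.1) ^+ 2 + (v1.2 - a * v2.2) ^+ 2.
  move: u1 u2; rewrite /a /dot2 => u1 u2.
  transitivity ((v1.1 * v1.1 + v1.2 * v1.2) - 2 * (v1.1 * v2.1 + v1.2 * v2.2) ^+ 2
    + (v1.1 * v2.1 + v1.2 * v2.2) ^+ 2 * (v2.1 * v2.1 + v2.2 * v2.2)); last by ring.
  by rewrite u1 u2 mulr1; ring.
rewrite -subr_gt0 E lt_neqAle addr_ge0 ?sqr_ge0 // andbT eq_sym paddr_eq0 ?sqr_ge0 //.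
rewrite !sqrf_eq0; apply/negP => /andP[/eqP h1 /eqP h2].
have [h _] : (1 : R) = 0 /\ - a = 0 by apply: li; rewrite mul1r mulNr.
by move/eqP: h; rewrite oner_eq0.
Qed.

Lemma G_canon (v1 v2 : R * R) c1 c2 : dot2 v1 v1 = 1 -> dot2 v2 v2 = 1 ->
  lin_indep2 v1 v2 ->
  G v1 v2 c1 c2 = G (dot2 v1 v2, Num.sqrt (1 - (dot2 v1 v2) ^+ 2)) (1, 0) c1 c2.
Proof.
move=> u1 u2 li.
have a1 := alpha_lt1 _ _ u1 u2 li.
set a := dot2 v1 v2 in a1 *.
set s := Num.sqrt (1 - a ^+ 2).
have s0 : 0 < s by rewrite sqrtr_gt0 subr_gt0.
have s2 : s ^+ 2 = 1 - a ^+ 2 by rewrite sqr_sqrtr // subr_ge0 ltW.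
have sn0 : s != 0 by rewrite gt_eqF.
pose r := (v1.1 - a * v2.1) / s.
pose t := (v1.2 - a * v2.2) / s.
have pq : v2.1 ^+ 2 + v2.2 ^+ 2 = 1 by rewrite -u2 /dot2; ring.
have rt : r ^+ 2 + t ^+ 2 = 1.
  have E : 1 - a ^+ 2 = (v1.1 - a * v2.1) ^+ 2 + (v1.2 - a * v2.2) ^+ 2.
    move: u1 u2; rewrite /a /dot2 => u1 u2.
    transitivity ((v1.1 * v1.1 + v1.2 * v1.2) - 2 * (v1.1 * v2.1 + v1.2 * v2.2) ^+ 2
      + (v1.1 * v2.1 + v1.2 * v2.2) ^+ 2 * (v2.1 * v2.1 + v2.2 * v2.2)); last by ring.
    by rewrite u1 u2 mulr1; ring.
  transitivity (((v1.1 - a * v2.1) ^+ 2 + (v1.2 - a * v2.2) ^+ 2) / s ^+ 2).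
    by rewrite /r /t; field.
  by rewrite -E -s2 divff // expf_neq0.
have o : v2.1 * r + v2.2 * t = 0.
  transitivity ((dot2 v1 v2 - a * dot2 v2 v2) / s); first by rewrite /r /t /dot2; field.
  by rewrite u2 mulr1 /a subrr mul0r.
have [c1' c2' c3'] := orth_cols _ _ _ _ pq rt o.
rewrite /G.
transitivity (\int[mu2]_z Gf (a, s) (1%R, 0%R) c1 c2 (lin2 v2.1 v2.2 r t z))%E.
  apply: eq_integral => z _; rewrite /Gf /lin2; congr (_ * _)%:E.
    rewrite /g0 /=; congr (_ * expR (- _ / 2)).
    transitivity ((v2.1 ^+ 2 + r ^+ 2) * z.1 ^+ 2 + 2 * (v2.1 * v2.2 + r * t) * z.1 * z.2
      + (v2.2 ^+ 2 + t ^+ 2) * z.2 ^+ 2); last by ring.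
    by rewrite c1' c2' c3' !mul1r mulr0 !mul0r addr0.
  rewrite !indicE; congr ((_ : bool)%:R).
  have e1 : dot2 (z : R * R) v1 = dot2 ((v2.1 * z.1 + v2.2 * z.2), (r * z.1 + t * z.2)) (a, s).
    by rewrite /dot2 /r /t /=; field.
  have e2 : dot2 (z : R * R) v2 = dot2 ((v2.1 * z.1 + v2.2 * z.2), (r * z.1 + t * z.2)) (1, 0).
    by rewrite /dot2 /=; ring.
  apply/idP/idP => /set_mem [h1 h2]; apply/mem_set; move: h1 h2; rewrite /HP /= => h1 h2.
    by rewrite -e1 -e2.
  by rewrite e1 e2.
apply: orth_inv => //; first exact: mGf.
by move=> z; exact: Gf_ge0.
Qed.
End canon.

Section fin.
Context {R : realType}.
Local Notation mu := (@lebesgue_measure R).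
Local Notation mu2 := (@lebesgue_measure R \x @lebesgue_measure R)%E.
Local Notation T2 := (measurableTypeR R * measurableTypeR R)%type.

Definition e1 (t : R) : R := expR (- (t ^+ 2) / 2).

Lemma me1 : measurable_fun setT e1.
Proof.
apply: measurableT_comp => //; apply: measurable_funM => //.
apply: measurableT_comp => //; exact: measurable_funX.
Qed.

Lemma me1T : measurable_fun [set: measurableTypeR R] e1.
Proof.
apply: measurableT_comp => //; apply: measurable_funM => //.
apply: measurableT_comp => //; exact: measurable_funX.
Qed.

Lemma int_e1 : (\int[mu]_t (e1 t)%:E = (Num.sqrt 2 * Num.sqrt pi)%:E)%E.
Proof.
pose k : R := (Num.sqrt 2)^-1.
have s2 : 0 < Num.sqrt (2 : R) by rewrite sqrtr_gt0.
have k0 : k != 0 by rewrite invr_eq0 gt_eqF.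
have E t : e1 t = gauss_fun (k * t + 0).
  rewrite /e1 /gauss_fun addr0 exprMn exprVn sqr_sqrtr ?ler0n //; congr expR.
  by rewrite mulNr mulrC.
under eq_integral do rewrite E.
rewrite (integral_aff k 0 (fun x => (gauss_fun x)%:E)) //.
- by rewrite integralT_gauss /k ger0_norm ?invr_ge0 ?ltW // invrK -EFinM.
- by apply/measurable_EFinP; exact: measurable_gauss_fun.
- by move=> x; rewrite lee_fin gauss_fun_ge0.
Qed.

Lemma int_g0_fin : (\int[mu2]_z (g0 z)%:E < +oo)%E.
Proof.
have E z : g0 z = (2 * pi)^-1 * e1 z.1 * e1 z.2.
  by rewrite /g0 /e1 -mulrA -expRD; congr (_ * expR _); ring.
under eq_integral do rewrite E.
have m : measurable_fun setT (fun z : T2 => ((2 * pi)^-1 * e1 z.1 * e1 z.2)%:E).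
  apply/measurable_EFinP; apply: measurable_funM; last exact: measurableT_comp me1 measurable_snd.
  apply: measurable_funM => //; exact: measurableT_comp me1 measurable_fst.
have pi0 : 0 <= (2 * pi)^-1 :> R by rewrite invr_ge0 mulr_ge0 // pi_ge0.
rewrite (fubini_tonelli1 _ m); last by move=> z; rewrite lee_fin !mulr_ge0 // expR_ge0.
have inner (x : R) : (\int[mu]_y ((2 * pi)^-1 * e1 x * e1 y)%:E =
    ((2 * pi)^-1 * e1 x)%:E * (Num.sqrt 2 * Num.sqrt pi)%:E)%E.
  under eq_integral do rewrite EFinM.
  rewrite ge0_integralZl //= ?int_e1 //.
  + by apply/measurable_EFinP; exact: me1T.
  + by move=> y _; rewrite lee_fin expR_ge0.
  + by rewrite lee_fin mulr_ge0 // expR_ge0.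
rewrite /fubini_F /=.
under eq_integral do rewrite inner.
rewrite ge0_integralZr //=.
- under eq_integral do rewrite EFinM.
  rewrite ge0_integralZl //= ?int_e1 -?EFinM ?ltry //.
  + by apply/measurable_EFinP; exact: me1T.
  + by move=> y _; rewrite lee_fin expR_ge0.
- apply/measurable_EFinP; apply: measurable_funM => //; exact: me1T.
- by move=> x _; rewrite lee_fin mulr_ge0 // expR_ge0.
Qed.
End fin.

Section pos.
Context {R : realType}.
Local Notation mu := (@lebesgue_measure R).
Local Notation mu2 := (@lebesgue_measure R \x @lebesgue_measure R)%E.
Local Notation T2 := (measurableTypeR R * measurableTypeR R)%type.

Lemma sq_bound (x z : R) : x - 1 < z < x + 1 -> z ^+ 2 <= 2 * (x ^+ 2 + 1).
Proof.
move=> /andP[h1 h2].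
have h3 : (z - x - 1) * (z - x + 1) < 0 by rewrite nmulr_rlt0 ?subr_lt0 //; lra.
have h4 : 0 <= (z - 2 * x) ^+ 2 by exact: sqr_ge0.
nra.
Qed.

Lemma pos_box (S : set T2) (x0 : T2) : measurable S ->
  (forall z : T2, x0.1 - 1 < z.1 < x0.1 + 1 -> x0.2 - 1 < z.2 < x0.2 + 1 -> S z) ->
  (0 < \int[mu2]_z (g0 z * \1_S z)%:E)%E.
Proof.
move=> mS hS.
pose I1 : set (measurableTypeR R) := `]x0.1 - 1, x0.1 + 1[%classic.
pose I2 : set (measurableTypeR R) := `]x0.2 - 1, x0.2 + 1[%classic.
pose B : set T2 := I1 `*` I2.
have mB : measurable B by apply: measurableX; exact: measurable_itv.
pose m : R := (2 * pi)^-1 * expR (- (2 * (x0.1 ^+ 2 + 1) + 2 * (x0.2 ^+ 2 + 1)) / 2).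
have m0 : 0 < m by rewrite mulr_gt0 ?expR_gt0 // invr_gt0 mulr_gt0 ?pi_gt0.
have le : (\int[mu2]_z (m * \1_B z)%:E <= \int[mu2]_z (g0 z * \1_S z)%:E)%E.
  apply: ge0_le_integral => //.
  - by move=> z _; rewrite lee_fin mulr_ge0 // ltW.
  - by apply/measurable_EFinP; apply: measurable_funM => //; exact: measurable_indic.
  - by apply/measurable_EFinP; apply: measurable_funM; [exact: mg0 | exact: measurable_indic].
  move=> z _; rewrite lee_fin !indicE; have [zB|zB] := boolP (z \in B); last first.
    by rewrite mulr0 mulr_ge0 // g0_ge0.
  move: (zB); rewrite inE => -[/= z1 z2].
  have z1' : x0.1 - 1 < z.1 < x0.1 + 1 by move: z1; rewrite /I1 /= in_itv.
  have z2' : x0.2 - 1 < z.2 < x0.2 + 1 by move: z2; rewrite /I2 /= in_itv.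
  rewrite mem_set; last exact: hS.
  rewrite !mulr1 /g0 ler_pM2l ?invr_gt0 ?mulr_gt0 ?pi_gt0 // ler_expR.
  rewrite !mulNr lerN2 ler_pM2r ?invr_gt0 //.
  have := sq_bound _ _ z1'; have := sq_bound _ _ z2'; lra.
apply: lt_le_trans le.
under eq_integral do rewrite EFinM.
rewrite ge0_integralZl //; [|by apply/measurable_EFinP; exact: measurable_indic|by rewrite lee_fin ltW].
rewrite integral_indic // setIT.
have hB : (mu \x mu)%E B = ((2 * 2 : R)%:E).
  transitivity (mu I1 * mu I2)%E; first by apply: product_measure1E; exact: measurable_itv.
  rewrite /I1 /I2 !lebesgue_measure_itv /= !lte_fin !ltrD2l ?gtrN ?ltr01 //.
  by rewrite -!EFinD -!EFinM; congr (_ * _)%:E; ring.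
rewrite [X in (_ * X)%E](_ : _ = (2 * 2 : R)%:E); last exact: hB.
by rewrite -EFinM lte_fin mulr_gt0 // mulr_gt0.
Qed.
End pos.

Section alg.
Context {R : realType}.

Lemma Dpos (a a' s s' : R) : 0 < s -> 0 < s' -> s ^+ 2 + a ^+ 2 = 1 ->
  s' ^+ 2 + a' ^+ 2 = 1 -> a < a' -> 0 < a' * s - a * s'.
Proof.
move=> s0 s'0 e e' aa.
have [a'0|a'0] := ltP 0 a'.
  have [a0|a0] := leP a 0; first by nra.
  have : s' < s by nra.
  nra.
have : s < s' by nra.
nra.
Qed.

Lemma cond_disj (a a' s s' d1 d2 : R) : 0 < s -> 0 < s' -> s ^+ 2 + a ^+ 2 = 1 ->
  s' ^+ 2 + a' ^+ 2 = 1 -> a' ^+ 2 < 1 -> a < a' -> 0 <= d1 -> 0 <= d2 ->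
  0 <= (a' * s - a * s') * d2 + (s' - s) * d1 \/
  0 <= (a' * s - a * s') * d1 + (s' - s) * d2.
Proof.
move=> s0 s'0 e e' a'1 aa d10 d20.
have D0 := Dpos _ _ _ _ s0 s'0 e e' aa.
pose C := a * a' + s * s'.
have C1 : 0 <= 1 - C.
  have -> : 1 - C = ((a - a') ^+ 2 + (s - s') ^+ 2) / 2.
    rewrite /C; apply: (@mulIf _ 2); first by rewrite pnatr_eq0.
    rewrite mulfVK ?pnatr_eq0 //.
    transitivity ((s ^+ 2 + a ^+ 2) + (s' ^+ 2 + a' ^+ 2) - 2 * (a * a' + s * s')); first by rewrite e e'; ring.
    by ring.
  by rewrite divr_ge0 // addr_ge0 // sqr_ge0.
have es : s = s' * C + a' * (a' * s - a * s').
  transitivity (s * (s' ^+ 2 + a' ^+ 2)); first by rewrite e' mulr1.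
  by rewrite /C; ring.
have I x y : (a' * s - a * s') * y + (s' - s) * x =
    s' * (1 - C) * x + (a' * s - a * s') * (y - a' * x).
  transitivity (s' * (1 - C) * x + (a' * s - a * s') * (y - a' * x) +
    x * (s' * C + a' * (a' * s - a * s') - s)); first by rewrite /C; ring.
  by rewrite -es subrr mulr0 addr0.
have [h|h] := leP (a' * d1) d2.
  left; rewrite I; apply: addr_ge0; first by rewrite !mulr_ge0 // ltW.
  by apply: mulr_ge0; [exact: ltW | rewrite subr_ge0].
right; rewrite I; apply: addr_ge0; first by rewrite !mulr_ge0 // ltW.
apply: mulr_ge0; first exact: ltW.
rewrite subr_ge0.
have [a'p|a'n] := ltP 0 a'; last by nra.
nra.
Qed.

End alg.

Section mono.
Context {R : realType}.
Local Notation mu2 := (@lebesgue_measure R \x @lebesgue_measure R)%E.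
Local Notation T2 := (measurableTypeR R * measurableTypeR R)%type.

Lemma prod_bound (a d : R) : a ^+ 2 <= 1 -> -1 < d < 1 -> -1 < a * d < 1.
Proof.
move=> a1 /andP[d1 d2].
have h1 : 0 <= (a - d) ^+ 2 := sqr_ge0 _.
have h2 : 0 <= (a + d) ^+ 2 := sqr_ge0 _.
have h3 : d ^+ 2 < 1 by nra.
apply/andP; split; nra.
Qed.

Lemma monoA (a a' d1 d2 : R) : a ^+ 2 < 1 -> a' ^+ 2 < 1 -> a < a' -> 0 <= d1 -> 0 <= d2 ->
  0 <= (a' * Num.sqrt (1 - a ^+ 2) - a * Num.sqrt (1 - a' ^+ 2)) * d2
       + (Num.sqrt (1 - a' ^+ 2) - Num.sqrt (1 - a ^+ 2)) * d1 ->
  (G (a, Num.sqrt (1 - a ^+ 2))%R (1%R, 0%R) (- d1)%R (- d2)%R <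
   G (a', Num.sqrt (1 - a' ^+ 2)) (1%R, 0%R) (- d1)%R (- d2)%R)%E.
Proof.
move=> a1 a'1 aa d10 d20.
set s := Num.sqrt (1 - a ^+ 2); set s' := Num.sqrt (1 - a' ^+ 2) => cA.
have s0 : 0 < s by rewrite sqrtr_gt0 subr_gt0.
have s'0 : 0 < s' by rewrite sqrtr_gt0 subr_gt0.
have e : s ^+ 2 + a ^+ 2 = 1 by rewrite sqr_sqrtr ?subrK // subr_ge0 ltW.
have e' : s' ^+ 2 + a' ^+ 2 = 1 by rewrite sqr_sqrtr ?subrK // subr_ge0 ltW.
have D0 := Dpos _ _ _ _ s0 s'0 e e' aa.
set Dd := a' * s - a * s' in D0 cA.
pose S := HP (a, s) (- d1) `&` HP (1, 0) (- d2).
pose S' := HP (a', s') (- d1) `&` HP (1, 0) (- d2).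
pose D := S' `\` S.
have mS : measurable S by apply: measurableI; exact: mHP.
have mS' : measurable S' by apply: measurableI; exact: mHP.
have mD : measurable D by exact: measurableD.
have sub : S `<=` S'.
  move=> z [h1 h2]; split => //; move: h1 h2; rewrite /HP /dot2 /= mulr1 mulr0 addr0 => h1 h2.
  suff : s * (z.1 * a' + z.2 * s') <= s * (- d1) by rewrite ler_pM2l.
  have h3 : s * z.2 <= - d1 - a * z.1 by lra.
  have h4 : s' * (s * z.2) <= s' * (- d1 - a * z.1) by rewrite ler_pM2l.
  have h5 : Dd * z.1 <= Dd * (- d2) by rewrite ler_pM2l.
  have -> : s * (z.1 * a' + z.2 * s') = Dd * z.1 + s' * (s * z.2) + s' * a * z.1 by rewrite /Dd; ring.
  have h6 : Dd * (- d2) - s' * d1 <= - (s * d1) by lra.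
  have h7 : s' * (- d1 - a * z.1) = - (s' * d1) - s' * a * z.1 by ring.
  lra.
have E z : (Gf (a', s') (1%R, 0%R) (- d1)%R (- d2)%R z =
    Gf (a, s) (1%R, 0%R) (- d1)%R (- d2)%R z + (g0 z * \1_D z)%:E)%E.
  rewrite /Gf -EFinD -mulrDr; congr (_ * _)%:E; rewrite !indicE -/S -/S'.
  have [zS|zS] := boolP (z \in S).
    rewrite (mem_set (sub z (set_mem zS))) memNset ?addr0 //.
    by move=> [_]; apply; exact: set_mem.
  rewrite add0r; congr ((_ : bool)%:R); apply/idP/idP.
    by move=> /set_mem zS'; apply: mem_set; split => // /mem_set; apply/negP.
  by move=> /set_mem [h _]; exact: mem_set.
have -> : G (a', s') (1%R, 0%R) (- d1)%R (- d2)%R =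
    (G (a, s) (1%R, 0%R) (- d1)%R (- d2)%R + \int[mu2]_z (g0 z * \1_D z)%:E)%E.
  rewrite /G; under eq_integral do rewrite E.
  rewrite ge0_integralD //.
  - by move=> z _; exact: Gf_ge0.
  - exact: mGf.
  - by move=> z _; rewrite lee_fin mulr_ge0 // g0_ge0.
  - by apply/measurable_EFinP; apply: measurable_funM; [exact: mg0 | exact: measurable_indic].
rewrite lteDl.
  pose T := (d1 + 2) / Dd + (d2 + 1) / (s + s').
  have ss0 : 0 < s + s' by rewrite addr_gt0.
  have hT1 : d1 + 2 <= T * Dd.
    have -> : T * Dd = (d1 + 2) + (d2 + 1) * Dd / (s + s') by rewrite /T; field; rewrite ?gt_eqF.
    by rewrite lerDl divr_ge0 // ?mulr_ge0 ?ltW // ?addr_ge0 //; lra.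
  have hT2 : d2 + 1 <= T * (s + s').
    have -> : T * (s + s') = (d1 + 2) * (s + s') / Dd + (d2 + 1) by rewrite /T; field; rewrite ?gt_eqF.
    by rewrite lerDr divr_ge0 // ?mulr_ge0 ?ltW // ?addr_ge0 //; lra.
  pose x0 : T2 := ((- (T * (s + s')))%R, (T * (a + a'))%R).
  apply: (pos_box _ x0) => // z /andP[z1 z2] /andP[z3 z4].
  pose u := z.1 - x0.1; pose v := z.2 - x0.2.
  have hu : -1 < u < 1 by apply/andP; split; rewrite /u; lra.
  have hv : -1 < v < 1 by apply/andP; split; rewrite /v; lra.
  have a2 : a ^+ 2 <= 1 by apply: ltW.
  have a'2 : a' ^+ 2 <= 1 by apply: ltW.
  have s2 : s ^+ 2 <= 1 by rewrite -e lerDl sqr_ge0.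
  have s'2 : s' ^+ 2 <= 1 by rewrite -e' lerDl sqr_ge0.
  move: (prod_bound _ _ a2 hu) (prod_bound _ _ s2 hv) (prod_bound _ _ a'2 hu) (prod_bound _ _ s'2 hv).
  move=> /andP[b1 b2] /andP[b3 b4] /andP[b5 b6] /andP[b7 b8].
  have q1 : z.1 * a + z.2 * s = T * Dd + a * u + s * v by rewrite /u /v /x0 /Dd /=; ring.
  have q2 : z.1 * a' + z.2 * s' = - (T * Dd) + a' * u + s' * v by rewrite /u /v /x0 /Dd /=; ring.
  have q3 : z.1 = - (T * (s + s')) + u by rewrite /u /x0 /=; ring.
  split.
    split; rewrite /HP /dot2 /=.
      rewrite q2; lra.
    by rewrite mulr1 mulr0 addr0 q3; lra.
  move=> [+ _]; rewrite /HP /dot2 /= q1; lra.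
rewrite ge0_fin_numE; last by apply: integral_ge0 => z _; exact: Gf_ge0.
apply: le_lt_trans (int_g0_fin (R:=R)).
apply: ge0_le_integral => //.
- by move=> z _; exact: Gf_ge0.
- exact: mGf.
- by apply/measurable_EFinP; exact: mg0.
- by move=> z _; rewrite lee_fin /Gf -[leRHS]mulr1 ler_wpM2l ?g0_ge0 //.
Qed.
End mono.

Section strict.
Context {R : realType}.

Lemma dot2C (u v : R * R) : dot2 u v = dot2 v u.
Proof. by rewrite /dot2 mulrC (mulrC u.2). Qed.

Lemma lin_indep2C (u v : R * R) : lin_indep2 u v -> lin_indep2 v u.
Proof.
move=> li a b h1 h2.
have [] := li b a; by [rewrite addrC | move=> -> ->].
Qed.

Lemma G_strict (v1 v2 v1' v2' : R * R) (d1 d2 : R) :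
  dot2 v1 v1 = 1 -> dot2 v2 v2 = 1 -> lin_indep2 v1 v2 ->
  dot2 v1' v1' = 1 -> dot2 v2' v2' = 1 -> lin_indep2 v1' v2' ->
  0 <= d1 -> 0 <= d2 -> dot2 v1 v2 < dot2 v1' v2' ->
  (G v1 v2 (- d1) (- d2) < G v1' v2' (- d1) (- d2))%E.
Proof.
move=> u1 u2 li u1' u2' li' d10 d20 aa.
have a1 := alpha_lt1 _ _ u1 u2 li.
have a1' := alpha_lt1 _ _ u1' u2' li'.
set a := dot2 v1 v2 in a1 aa; set a' := dot2 v1' v2' in a1' aa.
set s := Num.sqrt (1 - a ^+ 2); set s' := Num.sqrt (1 - a' ^+ 2).
have s0 : 0 < s by rewrite sqrtr_gt0 subr_gt0.
have s'0 : 0 < s' by rewrite sqrtr_gt0 subr_gt0.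
have e : s ^+ 2 + a ^+ 2 = 1 by rewrite sqr_sqrtr ?subrK // subr_ge0 ltW.
have e' : s' ^+ 2 + a' ^+ 2 = 1 by rewrite sqr_sqrtr ?subrK // subr_ge0 ltW.
have [cA|cB] := cond_disj _ _ _ _ _ _ s0 s'0 e e' a1' aa d10 d20.
  rewrite (G_canon v1 v2) // (G_canon v1' v2') // -/a -/a' -/s -/s'.
  exact: monoA.
rewrite G_swap (G_swap v1') (G_canon v2 v1); try exact: lin_indep2C.
rewrite (G_canon v2' v1'); try exact: lin_indep2C.
have -> : dot2 v2 v1 = a by rewrite /a dot2C.
have -> : dot2 v2' v1' = a' by rewrite /a' dot2C.
rewrite -/s -/s'.
exact: monoA.
all: by [].
Qed.
End strict.

Theorem lemma2 (R : realType) (v1 v2 xi v1' v2' xi' : R * R) :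
  admissible v1 v2 xi ->
  admissible v1' v2' xi' ->
  dot2 v1 xi = dot2 v1' xi' ->
  dot2 v2 xi = dot2 v2' xi' ->
  gamma12 v1 v2 xi = gamma12 v1' v2' xi' ->
  dot2 v1' v2' = dot2 v1 v2.
Proof.
move=> [u1 u2 li d1 d2] [u1' u2' li' _ _] H1 H2 Hg.
move: Hg; rewrite !gamma_G -H1 -H2 => Hg.
have [lt|gt|//] := ltgtP (dot2 v1' v2') (dot2 v1 v2).
  have := G_strict _ _ _ _ _ _ u1' u2' li' u1 u2 li d1 d2 lt.
  by rewrite Hg ltxx.
have := G_strict _ _ _ _ _ _ u1 u2 li u1' u2' li' d1 d2 gt.
by rewrite Hg ltxx.
Qed.
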